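(* Let $\mathbf r=(M,\Delta)$ be an RSP (realization spectrum problem, as defined in the context) with associated preorder $(\mathscr T,\le_{\mathscr T})$ and model $N=N_{\mathbf r}$. Let $\kappa=\min\{\mathfrak t_{\mathbf r},\mathfrak p_{\mathbf r}\}$. Then $N$ is $(\kappa,1,\Delta)$-saturated, i.e. whenever $p(x)$ is a set of fewer than $\kappa$ formulas of the form $\varphi(x,\bar a)$ with $\varphi(x,\bar y)\in\Delta$ and $\bar a$ a tuple from $N$, and $p$ is finitely satisfiable in $N$, then $p$ is realized in $N$.
   Context: An RSP $\mathbf r=(M,\Delta)$ consists of: (a) a model $M$; (b) predicates $\mathscr T,\le_{\mathscr T}$ and an individual constant $c$ of $\tau_M$ such that $\le_{\mathscr T}^M$ is a preorder on $\mathscr T^M$ (reflexive and transitive; antisymmetry is not required) and $\mathrm{rt}:=c^M\in\mathscr T^M$ satisfies $\mathrm{rt}\le_{\mathscr T} t$ for all $t\in\mathscr T^M$; (c) a unary predicate $P$ and a model $N$ with universe $P^M$ and vocabulary $\tau_N\subseteq\tau_M$, whose relations and functions are those of $M$ (so formulas of $\tau_N$ are interpreted in $M$ with all variables ranging over $P^M$); (d) a set $\Delta$ of first-order formulas $\varphi(x,\bar y)$ of $\tau_N$ closed under conjunctions (if $\varphi_1(x,\bar y_1),\varphi_2(x,\bar y_2)\in\Delta$ then $\varphi_1(x,\bar y_1')\wedge\varphi_2(x,\bar y_2'')\in\Delta$); write $\Delta(N)=\{\varphi(x,\bar a):\varphi(x,\bar y)\in\Delta,\ \bar a$ from $N\}$;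 (e) a binary relation $R^M\subseteq |N|\times\mathscr T^M$, and for $t\in\mathscr T^M$ put $R_t=\{b: bR^Mt\}$; (f) $R_{\mathrm{rt}}=|N|$; (g) if $s\le_{\mathscr T}t$ then $R_s\supseteq R_t$; (h) $R_t\neq\emptyset$ for every $t\in\mathscr T^M$; (i) if $s\in\mathscr T^M$, $\varphi(x,\bar a)\in\Delta(N)$ and some $b\in R_s$ satisfies $N\models\varphi[b,\bar a]$, then there is $t\in\mathscr T^M$ with $s\le_{\mathscr T}t$ and $R_t=\{b\in R_s:N\models\varphi[b,\bar a]\}$; (j) for each $\varphi\in\Delta$ there is a function $F_{\varphi,2}$ of $M$ such that whenever $t\in\mathscr T^M$, $\varphi(x,\bar a)\in\Delta(N)$ and $\varphi(N,\bar a)\ne\emptyset$, the element $s=F_{\varphi,2}(t,\bar a)$ satisfies $s\le_{\mathscr T}t$, $R_s\cap\varphi(N,\bar a)\neq\emptyset$, and every $s_1\le_{\mathscr T}t$ with $R_{s_1}\cap\varphi(N,\bar a)\ne\emptyset$ satisfies $s_1\le_{\mathscr T}s$. For a preorder $(\mathscr T,\le)$: write $s<t$ for $s\le t\wedge s\ne t$. $\mathfrak t_{\mathbf r}$ is the least infinite cardinal $\kappa$ such that there is a $<$-increasing sequence of length $\kappa$ in $\mathscr T^M$ with no upper bound. A $(\kappa_1,\kappa_2)$-pre-cut is a pair $(C_1,C_2)$ of subsets with $C_1\cup C_2$ linearly ordered by $\le$, $a_1\le a_2$ for all $a_1\in C_1,a_2\in C_2$, no $c$ with $a_1\le c\le a_2$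 for all $a_1\in C_1,a_2\in C_2$, $C_1$ of cofinality $\kappa_1$ and $C_2$ with the reversed order of cofinality $\kappa_2$. $\mathfrak p_{\mathbf r}=\min\{\kappa_1+\kappa_2:\kappa_1,\kappa_2\ge\aleph_0$ and $(\mathscr T^M,\le_{\mathscr T})$ has a $(\kappa_1,\kappa_2)$-pre-cut$\}$. *)

(* Defs.v *)
From Stdlib Require List.
From mathcomp Require Import all_boot.
Set Implicit Arguments.
Unset Strict Implicit.
Unset Printing Implicit Defensive.

Record vocab := Vocab {
  fsym : Type; farity : fsym -> nat;
  rsym : Type; rarity : rsym -> nat }.

Section Syntax.
Variable L : vocab.

Inductive term : Type :=
  | tvar : nat -> term
  | tfun (f : fsym L) : ('I_(farity f) -> term) -> term.

(* variable 0 is bound by fEx / fAll *)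
Inductive formula : Type :=
  | fEq  : term -> term -> formula
  | fRel (r : rsym L) : ('I_(rarity r) -> term) -> formula
  | fNot : formula -> formula
  | fAnd : formula -> formula -> formula
  | fOr  : formula -> formula -> formula
  | fImp : formula -> formula -> formula
  | fEx  : formula -> formula
  | fAll : formula -> formula.

Fixpoint ren_term (rho : nat -> nat) (t : term) : term :=
  match t with
  | tvar i => tvar (rho i)
  | tfun f a => tfun (fun k => ren_term rho (a k))
  end.

Definition up (rho : nat -> nat) : nat -> nat :=
  fun i => match i with 0 => 0 | S j => S (rho j) end.

Fixpoint ren (rho : nat -> nat) (phi : formula) : formula :=
  match phi with
  | fEq t1 t2 => fEq (ren_term rho t1) (ren_term rho t2)
  | fRel r a => fRel (fun k => ren_term rho (a k))
  | fNot p => fNot (ren rho p)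
  | fAnd p q => fAnd (ren rho p) (ren rho q)
  | fOr p q => fOr (ren rho p) (ren rho q)
  | fImp p q => fImp (ren rho p) (ren rho q)
  | fEx p => fEx (ren (up rho) p)
  | fAll p => fAll (ren (up rho) p)
  end.

Fixpoint scoped_term (k : nat) (t : term) : Prop :=
  match t with
  | tvar i => i < k
  | tfun f a => forall j, scoped_term k (a j)
  end.

Fixpoint scoped (k : nat) (phi : formula) : Prop :=
  match phi with
  | fEq t1 t2 => scoped_term k t1 /\ scoped_term k t2
  | fRel r a => forall j, scoped_term k (a j)
  | fNot p => scoped k p
  | fAnd p q | fOr p q | fImp p q => scoped k p /\ scoped k q
  | fEx p | fAll p => scoped k.+1 p
  end.

Record structure (D : Type) := Structure {
  sfun : forall f : fsym L, ('I_(farity f) -> D) -> D;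
  srel : forall r : rsym L, ('I_(rarity r) -> D) -> Prop }.

Definition scons (D : Type) (d : D) (v : nat -> D) : nat -> D :=
  fun i => match i with 0 => d | S j => v j end.

Fixpoint eval (D : Type) (N : structure D) (v : nat -> D) (t : term) : D :=
  match t with
  | tvar i => v i
  | tfun f a => sfun N (fun k => eval N v (a k))
  end.

Fixpoint sat (D : Type) (N : structure D) (v : nat -> D) (phi : formula) : Prop :=
  match phi with
  | fEq t1 t2 => eval N v t1 = eval N v t2
  | fRel r a => srel N (fun k => eval N v (a k))
  | fNot p => ~ sat N v p
  | fAnd p q => sat N v p /\ sat N v q
  | fOr p q => sat N v p \/ sat N v q
  | fImp p q => sat N v p -> sat N v q
  | fEx p => exists d, sat N (scons d v) p
  | fAll p => forall d, sat N (scons d v) p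
  end.

(* N |= phi[x, a] for phi(x, y_1..y_n): x is variable 0, y_i is variable i *)
Definition holds (D : Type) (N : structure D) (phi : formula) (n : nat)
  (x : D) (a : n.-tuple D) : Prop :=
  sat N (scons x (fun j => nth x a j)) phi.

(* renaming phi(x, y_1..y_n) to phi(x, y_{m+1}..y_{m+n}) *)
Definition shift_by (m : nat) : nat -> nat :=
  fun i => match i with 0 => 0 | S j => S (m + j) end.

End Syntax.

(* A formula with parameters phi(x, a), phi(x,y) of arity 1 + n. *)
Record pformula (L : vocab) (D : Type) := PForm {
  pf_n : nat; pf_phi : formula L; pf_par : pf_n.-tuple D }.

Definition card_le (A B : Type) : Prop := exists f : A -> B, injective f.
Definition card_lt (A B : Type) : Prop := card_le A B /\ ~ card_le B A.
Definition card_eq (A B : Type) : Prop := card_le A B /\ card_le B A.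
Definition infinite_type (A : Type) : Prop := card_le nat A.

(* An initial ordinal (= a cardinal, as a well-ordered index set):
   a strict well-order every proper initial segment of which has
   strictly smaller cardinality. *)
Record initial_ordinal := InitialOrdinal {
  io_car :> Type;
  io_lt : io_car -> io_car -> Prop;
  io_wf : well_founded io_lt;
  io_trans : forall i j k, io_lt i j -> io_lt j k -> io_lt i k;
  io_total : forall i j, io_lt i j \/ i = j \/ io_lt j i;
  io_initial : forall i, ~ card_le io_car {j | io_lt j i} }.

Section Invariants.
Variables (U : Type) (TT : U -> Prop) (le : U -> U -> Prop).

Definition ltT (s t : U) : Prop := le s t /\ s <> t.

Definition increasing_seq (K : initial_ordinal) (s : K -> U) : Prop :=
  (forall i, TT (s i)) /\ (forall i j, io_lt i j -> ltT (s i) (s j)).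

Definition has_ub (K : Type) (s : K -> U) : Prop :=
  exists u, TT u /\ forall i, le (s i) u.

(* |X| < t_r : X is smaller than every infinite cardinal kappa carrying a
   <-increasing unbounded kappa-sequence (vacuous if there is none). *)
Definition below_t (X : Type) : Prop :=
  forall K : initial_ordinal, infinite_type K ->
    (exists s : K -> U, increasing_seq s /\ ~ has_ub s) -> card_lt X K.

Definition cofinal (r : U -> U -> Prop) (C D : U -> Prop) : Prop :=
  forall a, C a -> exists d, D d /\ r a d.

Definition has_cof (r : U -> U -> Prop) (C : U -> Prop) (K : Type) : Prop :=
  (exists D : U -> Prop, (forall x, D x -> C x) /\ cofinal r C D /\
     card_eq {x | D x} K) /\
  (forall D : U -> Prop, (forall x, D x -> C x) -> cofinal r C D ->
     card_le K {x | D x}).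

Definition precut (C1 C2 : U -> Prop) (K1 K2 : Type) : Prop :=
  (forall a, C1 a \/ C2 a -> TT a) /\
  (forall a b, C1 a \/ C2 a -> C1 b \/ C2 b -> le a b \/ le b a) /\
  (forall a1 a2, C1 a1 -> C2 a2 -> le a1 a2) /\
  ~ (exists c, TT c /\ forall a1 a2, C1 a1 -> C2 a2 -> le a1 c /\ le c a2) /\
  has_cof le C1 K1 /\
  has_cof (fun a b => le b a) C2 K2.

(* |X| < p_r *)
Definition below_p (X : Type) : Prop :=
  forall K1 K2 : Type, infinite_type K1 -> infinite_type K2 ->
    (exists C1 C2, precut C1 C2 K1 K2) -> card_lt X (K1 + K2)%type.

(* |X| < kappa = min {t_r, p_r} *)
Definition below_kappa (X : Type) : Prop := below_t X /\ below_p X.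

End Invariants.

(* U : universe of M;  TT = T^M, le = <=_T^M, rt = c^M;
   N : the L-structure N (L = tau_N) with universe D;
   Delta n phi : phi(x, y_1..y_n) belongs to Delta;
   R b t : b R^M t;  F n phi = F_{phi,2}. *)
Record RSP (L : vocab) (D : Type) (N : structure L D) (U : Type)
  (TT : U -> Prop) (le : U -> U -> Prop) (rt : U)
  (Delta : nat -> formula L -> Prop) (R : D -> U -> Prop)
  (F : forall n : nat, formula L -> U -> n.-tuple D -> U) : Prop := {
  rsp_refl : forall t, TT t -> le t t;
  rsp_trans : forall s t u, TT s -> TT t -> TT u -> le s t -> le t u -> le s u;
  rsp_rt : TT rt;
  rsp_rt_le : forall t, TT t -> le rt t;
  rsp_scoped : forall n phi, Delta n phi -> scoped n.+1 phi;
  rsp_conj : forall n1 phi1 n2 phi2, Delta n1 phi1 -> Delta n2 phi2 ->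
      Delta (n1 + n2) (fAnd phi1 (ren (shift_by n1) phi2));
  rsp_R_T : forall b t, R b t -> TT t;
  rsp_R_rt : forall b, R b rt;
  rsp_R_mono : forall s t, TT s -> TT t -> le s t -> forall b, R b t -> R b s;
  rsp_R_ne : forall t, TT t -> exists b, R b t;
  rsp_refine : forall s, TT s -> forall n phi, Delta n phi ->
      forall a : n.-tuple D, (exists b, R b s /\ holds N phi b a) ->
      exists t, [/\ TT t, le s t &
        forall b, R b t <-> (R b s /\ holds N phi b a)];
  rsp_F : forall n phi, Delta n phi -> forall t, TT t ->
      forall a : n.-tuple D, (exists b, holds N phi b a) ->
      let s := F n phi t a in
      [/\ TT s, le s t, (exists b, R b s /\ holds N phi b a) &
        forall s1, TT s1 -> le s1 t -> (exists b, R b s1 /\ holds N phi b a) ->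
          le s1 s] }.

Definition pholds (L : vocab) (D : Type) (N : structure L D) (b : D)
  (q : pformula L D) : Prop := holds N (pf_phi q) b (pf_par q).

Definition fin_sat (L : vocab) (D : Type) (N : structure L D)
  (p : pformula L D -> Prop) : Prop :=
  forall l : seq (pformula L D), (forall q, List.In q l -> p q) ->
    exists b, forall q, List.In q l -> pholds N b q.

Definition realized (L : vocab) (D : Type) (N : structure L D)
  (p : pformula L D -> Prop) : Prop :=
  exists b, forall q, p q -> pholds N b q.

(* small X  <->  |X| < kappa *)
Definition saturated (L : vocab) (D : Type) (N : structure L D)
  (small : Type -> Prop) (Delta : nat -> formula L -> Prop) : Prop :=
  forall p : pformula L D -> Prop,
    (forall q, p q -> Delta (pf_n q) (pf_phi q)) ->
    small {q | p q} -> fin_sat N p -> realized N p.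

(* Main.v *)
Require Import Defs.
From mathcomp Require Import all_boot.
From mathcomp Require Import boolp.
From Stdlib Require Import Classical ClassicalEpsilon FunctionalExtensionality PropExtensionality ProofIrrelevance.
From Stdlib Require Import Wellfounded.
From Stdlib Require Cantor.
From mathcomp Require classical_sets wochoice.
Set Implicit Arguments.
Unset Strict Implicit.


Definition swo (I : Type) (lt : I -> I -> Prop) :=
  well_founded lt /\ (forall i j k, lt i j -> lt j k -> lt i k) /\
  (forall i j, lt i j \/ i = j \/ lt j i).



Lemma wf_irrefl (I : Type) (lt : I -> I -> Prop) : well_founded lt -> forall x, ~ lt x x.
Proof.
  intros wf x. induction (wf x) as [x _ IH]. intros H. exact (IH x H H).
Qed.

Lemma wf_min (I : Type) (lt : I -> I -> Prop) : well_founded lt ->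
  forall P : I -> Prop, (exists x, P x) -> exists m, P m /\ forall y, lt y m -> ~ P y.
Proof.
  intros wf P [x Px]. apply NNPP; intros Hn.
  assert (forall z, ~ P z) as H.
  { intros z. induction (wf z) as [z _ IH]. intros Pz. apply Hn. exists z. split; auto. }
  exact (H x Px).
Qed.

Lemma wo_exists (T : Type) : exists lt : T -> T -> Prop, swo lt.
Proof.
  destruct (wochoice.well_ordering_principle (boolp.classicType T)) as [R HR].
  assert (Hmin : forall P : T -> Prop, (exists x, P x) ->
     exists z, P z /\ (forall x, P x -> R z x) /\
       (forall z', P z' -> (forall x, P x -> R z' x) -> z = z')).
  { intros P [x Px].
    destruct (HR (fun z => boolp.asbool (P z))) as [z [[Hz1 Hz2] Hu]].
    - exists x. unfold in_mem; simpl. apply/boolp.asboolP. exact Px.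
    - exists z. split; [|split].
      + move: Hz1. unfold in_mem; simpl. move/boolp.asboolP. auto.
      + intros y Py. apply Hz2. unfold in_mem; simpl. apply/boolp.asboolP. exact Py.
      + intros z' Pz' Hz'. apply Hu. split.
        * unfold in_mem; simpl. apply/boolp.asboolP. exact Pz'.
        * intros w. unfold in_mem; simpl. move/boolp.asboolP. auto. }
  assert (Hrefl : forall x, R x x).
  { intros x. destruct (Hmin (fun z => z = x)) as [z0 [-> [Hr _]]]; [eauto|]. apply Hr; auto. }
  assert (Hanti : forall x y, R x y -> R y x -> x = y).
  { intros x y Hxy Hyx.
    destruct (Hmin (fun z => z = x \/ z = y)) as [z [_ [_ Hu]]]; [eauto|].
    transitivity z; [symmetry|]; apply Hu; auto;
      intros w [-> | ->]; auto. }
  assert (Htot : forall x y, R x y \/ R y x).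
  { intros x y. destruct (Hmin (fun z => z = x \/ z = y)) as [z [[->| ->] [Hr _]]]; [eauto| |].
    left; apply Hr; auto. right; apply Hr; auto. }
  assert (Htr : forall x y z, R x y -> R y z -> R x z).
  { intros x y z Hxy Hyz.
    destruct (Hmin (fun w => w = x \/ w = y \/ w = z)) as [m [Hm [Hr _]]]; [eauto|].
    destruct Hm as [-> | [-> | ->]].
    - apply Hr; auto.
    - assert (x = y) as <- by (apply Hanti; auto; apply Hr; auto). exact Hyz.
    - assert (y = z) as <- by (apply Hanti; auto; apply Hr; auto). exact Hxy. }
  exists (fun x y => R x y /\ x <> y). split; [|split].
  - intros x. apply NNPP; intros Hx.
    destruct (Hmin (fun z => ~ Acc (fun x y => R x y /\ x <> y) z)) as [m [Hm [Hr _]]]; [eauto|].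
    apply Hm. constructor. intros y [Hym Hne]. apply NNPP; intros Hy.
    apply Hne. apply Hanti; auto.
  - intros i j k [Hij Nij] [Hjk Njk]. split; [eauto|].
    intros ->. apply Nij. apply Hanti; auto.
  - intros i j. destruct (classic (i = j)) as [->|Hne]; [right; left; auto|].
    destruct (Htot i j); [left|right; right]; split; auto.
Qed.


Lemma zorn_prop (T : Type) (t0 : T) (R : T -> T -> Prop) :
  (forall t, R t t) -> (forall r s t, R r s -> R s t -> R r t) ->
  (forall A : T -> Prop, (forall s t, A s -> A t -> R s t \/ R t s) ->
     exists u, forall s, A s -> R s u) ->
  exists m, forall s, R m s -> R s m.
Proof.
  intros Hr Ht Hc.
  destruct (@classical_sets.ZL_preorder T t0 (fun x y => asbool (R x y))) as [m Hm].
  - intros t. apply/asboolP. auto.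
  - intros r s t H1 H2. apply/asboolP. move/asboolP: H1. move/asboolP: H2. eauto.
  - intros A HA. destruct (Hc A) as [u Hu].
    + intros s t As At. destruct (HA s t As At) as [H|H]; move/asboolP: H; auto.
    + exists u. intros s As. apply/asboolP. auto.
  - exists m. intros s Hs. have := Hm s. move=> H. apply/asboolP. apply H. apply/asboolP. exact Hs.
Qed.

Lemma card_le_refl (A : Type) : card_le A A.
Proof. exists id. intros x y; auto. Qed.

Lemma card_le_trans (A B C : Type) : card_le A B -> card_le B C -> card_le A C.
Proof.
  intros [f Hf] [g Hg]. exists (fun x => g (f x)). intros x y H. apply Hf, Hg, H.
Qed.

Lemma card_le_sub (T : Type) (A B : T -> Prop) : (forall x, A x -> B x) ->
  card_le {x | A x} {x | B x}.
Proof.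
  intros H. exists (fun x => exist _ (proj1_sig x) (H _ (proj2_sig x))).
  intros [x px] [y py] E. simpl in E. injection E as ->. f_equal. apply proof_irrelevance.
Qed.

Lemma card_le_sig (T : Type) (A : T -> Prop) : card_le {x | A x} T.
Proof.
  exists (@proj1_sig _ _). intros [x px] [y py] E. simpl in E. subst. f_equal. apply proof_irrelevance.
Qed.

Lemma card_le_image (I T : Type) (g : I -> T) (C : T -> Prop) :
  (forall x, C x -> exists i, g i = x) -> card_le {x | C x} I.
Proof.
  intros H.
  pose (h := fun x : {x | C x} => proj1_sig (constructive_indefinite_description _ (H _ (proj2_sig x)))).
  exists h. intros [x px] [y py] E. unfold h in E. simpl in E.
  destruct (constructive_indefinite_description _ (H x px)) as [i Hi].
  destruct (constructive_indefinite_description _ (H y py)) as [j Hj]. simpl in E. subst.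
  f_equal. apply proof_irrelevance.
Qed.

Lemma sig_eq (T : Type) (P : T -> Prop) (x y : {z | P z}) : proj1_sig x = proj1_sig y -> x = y.
Proof. destruct x, y; simpl; intros ->. f_equal. apply proof_irrelevance. Qed.

Section Seg.
Variables (I : Type) (lt : I -> I -> Prop) (Hwo : swo lt) (J : I -> Prop).

Let wf := proj1 Hwo.
Let trans := proj1 (proj2 Hwo).
Let tot := proj2 (proj2 Hwo).
Let irr := wf_irrefl wf.

Record inv (f : I -> I -> Prop) : Prop := {
  iJ : forall k x, f k x -> J x;
  ifun : forall k x y, f k x -> f k y -> x = y;
  iinj : forall k k' x, f k x -> f k' x -> k = k';
  imono : forall k x k' x', f k x -> f k' x' -> lt k k' -> lt x x';
  idom : forall k x k', f k x -> lt k' k -> exists x', f k' x';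
  iran : forall k x y, f k x -> J y -> lt y x -> exists k', f k' y }.

Definition st := {f | inv f}.

Lemma seg_lemma :
  (exists j, card_le {x | J x} {k | lt k j} /\ card_le {k | lt k j} {x | J x}) \/ card_le I {x | J x}.
Proof.
  pose (R := fun f g : st => forall k x, proj1_sig f k x -> proj1_sig g k x).
  assert (inv0 : inv (fun _ _ => False)) by (constructor; intros; contradiction).
  destruct (@zorn_prop st (exist _ _ inv0) R) as [[f Hf] Hmax].
  - intros t k x; auto.
  - intros r s t H1 H2 k x H. auto.
  - intros A HA.
    pose (u := fun k x => exists s, A s /\ proj1_sig s k x).
    assert (common : forall s1 s2 k1 x1 k2 x2, A s1 -> A s2 -> proj1_sig s1 k1 x1 -> proj1_sig s2 k2 x2 ->
       exists s, A s /\ proj1_sig s k1 x1 /\ proj1_sig s k2 x2).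
    { intros s1 s2 k1 x1 k2 x2 A1 A2 H1 H2. destruct (HA s1 s2 A1 A2) as [H|H].
      - exists s2. repeat split; auto.
      - exists s1. repeat split; auto. }
    assert (Hu : inv u).
    { constructor.
      - intros k x [s [_ Hs]]. exact (iJ (proj2_sig s) Hs).
      - intros k x y [s1 [A1 H1]] [s2 [A2 H2]].
        destruct (common _ _ _ _ _ _ A1 A2 H1 H2) as [s [_ [G1 G2]]]. exact (ifun (proj2_sig s) G1 G2).
      - intros k k' x [s1 [A1 H1]] [s2 [A2 H2]].
        destruct (common _ _ _ _ _ _ A1 A2 H1 H2) as [s [_ [G1 G2]]]. exact (iinj (proj2_sig s) G1 G2).
      - intros k x k' x' [s1 [A1 H1]] [s2 [A2 H2]].
        destruct (common _ _ _ _ _ _ A1 A2 H1 H2) as [s [_ [G1 G2]]]. exact (imono (proj2_sig s) G1 G2).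
      - intros k x k' [s [As Hs]] Hl. destruct (idom (proj2_sig s) Hs Hl) as [x' Hx'].
        exists x'. exists s. auto.
      - intros k x y [s [As Hs]] Jy Hl. destruct (iran (proj2_sig s) Hs Jy Hl) as [k' Hk'].
        exists k'. exists s. auto. }
    exists (exist _ u Hu). intros s As k x H. exists s. auto.
  - simpl in *.
    assert (factk : forall k x k0, f k x -> ~ (exists x, f k0 x) -> lt k k0).
    { intros k x k0 H N. destruct (tot k k0) as [|[->|H']]; auto.
      - exfalso; apply N; eauto.
      - exfalso; apply N. exact (idom Hf H H'). }
    assert (factx : forall k x y0, f k x -> J y0 -> ~ (exists k, f k y0) -> lt x y0).
    { intros k x y0 H Jy N. destruct (tot x y0) as [|[->|H']]; auto.
      - exfalso; apply N; eauto.
      - exfalso; apply N. exact (iran Hf H Jy H'). }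
    assert (Hdr : (forall k, exists x, f k x) \/ (forall y, J y -> exists k, f k y)).
    { apply NNPP; intros Hn. apply not_or_and in Hn as [H1 H2].
      apply not_all_ex_not in H1 as [k1 Hk1]. apply not_all_ex_not in H2 as [y1 Hy1].
      apply imply_to_and in Hy1 as [Jy1 Hy1].
      destruct (@wf_min _ _ wf (fun k => ~ exists x, f k x) (ex_intro _ k1 Hk1)) as [k0 [Hk0 Hk0m]].
      destruct (@wf_min _ _ wf (fun y => J y /\ ~ exists k, f k y) (ex_intro _ y1 (conj Jy1 Hy1)))
        as [y0 [[Jy0 Hy0] Hy0m]].
      pose (f' := fun k x => f k x \/ (k = k0 /\ x = y0)).
      assert (Hf' : inv f').
      { constructor.
        - intros k x [H|[-> ->]]; [exact (iJ Hf H)|auto].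
        - intros k x y [H|[-> ->]] [H'|[E ->]].
          + exact (ifun Hf H H').
          + subst. exfalso; apply Hk0; eauto.
          + exfalso; apply Hk0; eauto.
          + auto.
        - intros k k' x [H|[-> ->]] [H'|[-> E]].
          + exact (iinj Hf H H').
          + subst. exfalso; apply Hy0; eauto.
          + exfalso; apply Hy0; eauto.
          + auto.
        - intros k x k' x' [H|[-> ->]] [H'|[-> ->]] Hl.
          + exact (imono Hf H H' Hl).
          + exact (factx _ _ _ H Jy0 Hy0).
          + exfalso. apply (@irr k0). apply (trans Hl). exact (factk _ _ _ H' Hk0).
          + exfalso. exact (@irr _ Hl).
        - intros k x k' [H|[-> ->]] Hl.
          + destruct (idom Hf H Hl) as [x' Hx']. exists x'. left; auto.
          + apply NNPP; intros N. apply (Hk0m k' Hl). intros [x' Hx']. apply N. exists x'. left; auto.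
        - intros k x y [H|[-> ->]] Jy Hl.
          + destruct (iran Hf H Jy Hl) as [k' Hk']. exists k'. left; auto.
          + apply NNPP; intros N. apply (Hy0m y Hl). split; auto. intros [k' Hk']. apply N. exists k'. left; auto. }
      have := Hmax (exist _ f' Hf'). simpl. intros HH.
      assert (f k0 y0) as Hin.
      { refine (HH _ k0 y0 _). intros k x H. left; auto. right; auto. }
      apply Hk0. eauto. }
    destruct (classic (forall k, exists x, f k x)) as [Hall|Hnall].
    + right.
      pose (g := fun k => constructive_indefinite_description _ (Hall k)).
      exists (fun k => exist J (proj1_sig (g k)) (iJ Hf (proj2_sig (g k)))).
      intros k k' E. injection E. intros E'. apply (iinj Hf (proj2_sig (g k))). rewrite E'. exact (proj2_sig (g k')).
    + destruct Hdr as [Hdr|Hran]; [contradiction|].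
      apply not_all_ex_not in Hnall as [k1 Hk1].
      destruct (@wf_min _ _ wf (fun k => ~ exists x, f k x) (ex_intro _ k1 Hk1)) as [k0 [Hk0 Hk0m]].
      left. exists k0. split.
      * pose (g := fun x : {x | J x} => constructive_indefinite_description _ (Hran _ (proj2_sig x))).
        exists (fun x => exist (fun k => lt k k0) (proj1_sig (g x)) (factk _ _ _ (proj2_sig (g x)) Hk0)).
        intros x x' E. injection E. intros E'. apply sig_eq.
        apply (ifun Hf (proj2_sig (g x))). rewrite E'. exact (proj2_sig (g x')).
      * assert (Hd : forall k : {k | lt k k0}, exists x, f (proj1_sig k) x).
        { intros [k Hk]. simpl. apply NNPP; intros N. exact (Hk0m k Hk N). }
        pose (g := fun k => constructive_indefinite_description _ (Hd k)).
        exists (fun k => exist J (proj1_sig (g k)) (iJ Hf (proj2_sig (g k)))).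
        intros k k' E. injection E. intros E'. apply sig_eq.
        apply (iinj Hf (proj2_sig (g k))). rewrite E'. exact (proj2_sig (g k')).
Qed.

End Seg.


Lemma card_total (A B : Type) : card_le A B \/ card_le B A.
Proof.
  destruct (wo_exists (A + B)) as [lt Hwo].
  pose (J1 := fun z : A + B => exists a, z = inl a).
  pose (J2 := fun z : A + B => exists b, z = inr b).
  assert (A1 : card_le A {z | J1 z}).
  { exists (fun a => exist J1 (inl a) (ex_intro _ a erefl)). intros a a' E. injection E. auto. }
  assert (A2 : card_le {z | J1 z} A).
  { exists (fun z => proj1_sig (constructive_indefinite_description (fun a => proj1_sig z = inl a) (proj2_sig z))).
    intros [z Hz] [z' Hz'] E. simpl in E.
    destruct (constructive_indefinite_description (fun a => z = inl a) Hz) as [a Ha].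
    destruct (constructive_indefinite_description (fun a => z' = inl a) Hz') as [a' Ha']. simpl in E. subst.
    apply sig_eq. reflexivity. }
  assert (B1 : card_le B {z | J2 z}).
  { exists (fun b => exist J2 (inr b) (ex_intro _ b erefl)). intros a a' E. injection E. auto. }
  assert (B2 : card_le {z | J2 z} B).
  { exists (fun z => proj1_sig (constructive_indefinite_description (fun a => proj1_sig z = inr a) (proj2_sig z))).
    intros [z Hz] [z' Hz'] E. simpl in E.
    destruct (constructive_indefinite_description (fun a => z = inr a) Hz) as [a Ha].
    destruct (constructive_indefinite_description (fun a => z' = inr a) Hz') as [a' Ha']. simpl in E. subst.
    apply sig_eq. reflexivity. }
  assert (AB : card_le A (A + B)) by (exists inl; intros x y E; injection E; auto).
  assert (BA : card_le B (A + B)) by (exists inr; intros x y E; injection E; auto).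
  destruct (seg_lemma Hwo J1) as [[j1 [H1 H1']]|H1].
  - destruct (seg_lemma Hwo J2) as [[j2 [H2 H2']]|H2].
    + destruct Hwo as [_ [tr tot]].
      assert (Hs : forall j j', lt j j' \/ j = j' -> card_le {k | lt k j} {k | lt k j'}).
      { intros j j' [H| ->]; [|apply card_le_refl]. apply card_le_sub. intros k Hk; eauto. }
      destruct (tot j1 j2) as [H|[H|H]].
      * left. eapply card_le_trans; [exact A1|]. eapply card_le_trans; [exact H1|].
        eapply card_le_trans; [apply (Hs j1 j2); auto|]. eapply card_le_trans; [exact H2'|exact B2].
      * left. eapply card_le_trans; [exact A1|]. eapply card_le_trans; [exact H1|].
        eapply card_le_trans; [apply (Hs j1 j2); auto|]. eapply card_le_trans; [exact H2'|exact B2].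
      * right. eapply card_le_trans; [exact B1|]. eapply card_le_trans; [exact H2|].
        eapply card_le_trans; [apply (Hs j2 j1); auto|]. eapply card_le_trans; [exact H1'|exact A2].
    + left. eapply card_le_trans; [exact AB|]. eapply card_le_trans; [exact H2|exact B2].
  - right. eapply card_le_trans; [exact BA|]. eapply card_le_trans; [exact H1|exact A2].
Qed.

Definition decP (P : Prop) : {P} + {~ P} := excluded_middle_informative P.

Section Hess.
Variables (X : Type) (iota : nat -> X) (iota_inj : injective iota).

Let iinv (a : X) : nat := epsilon (inhabits 0) (fun n => iota n = a).
Let iinvK n : iinv (iota n) = n.
Proof.
  unfold iinv. apply iota_inj. apply (epsilon_spec (inhabits 0) (fun m => iota m = iota n)). eauto.
Qed.

Let A0 (x : X) := exists n, x = iota n.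
Let f0 (a b : X) : X := iota (Cantor.to_nat (iinv a, iinv b)).

Record hinv (A : X -> Prop) (f : X -> X -> X) : Prop := {
  h0 : forall x, A0 x -> A x;
  hb : forall a b, A0 a -> A0 b -> f a b = f0 a b;
  hc : forall a b, A a -> A b -> A (f a b);
  hi : forall a b a' b', A a -> A b -> A a' -> A b' -> f a b = f a' b' -> a = a' /\ b = b' }.

Definition hst := {p : (X -> Prop) * (X -> X -> X) | hinv p.1 p.2}.

Let hR (s s' : hst) := (forall x, (proj1_sig s).1 x -> (proj1_sig s').1 x) /\
  (forall a b, (proj1_sig s).1 a -> (proj1_sig s).1 b -> (proj1_sig s').2 a b = (proj1_sig s).2 a b).

Lemma hinv0 : hinv A0 f0.
Proof.
  constructor; auto.
  - intros a b [n ->] [m ->]. exists (Cantor.to_nat (iinv (iota n), iinv (iota m))). reflexivity.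
  - intros a b a' b' [n ->] [m ->] [n' ->] [m' ->] E. unfold f0 in E.
    apply iota_inj in E. apply (f_equal Cantor.of_nat) in E. rewrite !Cantor.cancel_of_to in E.
    rewrite !iinvK in E. injection E as -> ->. auto.
Qed.

Lemma hess_core : exists A f, hinv A f /\ card_le X {x | A x}.
Proof.
  pose (base := exist (fun p => hinv p.1 p.2) (A0, f0) hinv0 : hst).
  destruct (@zorn_prop hst base hR) as [[[A f] Hf] Hmax].
  - intros s. split; auto.
  - intros r s t [H1 H2] [H3 H4]. split; auto.
    intros a b Ha Hb. rewrite H4; auto.
  - intros Ch HCh.
    pose (Ch' := fun s => Ch s \/ s = base).
    assert (Hbase : forall s, hR base s).
    { intros [[A f] Hf]. split; simpl.
      - exact (h0 Hf).
      - intros a b Ha Hb. exact (hb Hf Ha Hb). }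
    assert (HCh' : forall s t, Ch' s -> Ch' t -> hR s t \/ hR t s).
    { intros s t [Hs| ->] [Ht| ->]; auto. }
    pose (Au := fun x => exists s, Ch' s /\ (proj1_sig s).1 x).
    pose (fu := fun a b => match decP (exists s, Ch' s /\ (proj1_sig s).1 a /\ (proj1_sig s).1 b) with
       | left H => (proj1_sig (proj1_sig (constructive_indefinite_description _ H))).2 a b
       | right _ => f0 a b end).
    assert (Hfu : forall s a b, Ch' s -> (proj1_sig s).1 a -> (proj1_sig s).1 b -> fu a b = (proj1_sig s).2 a b).
    { intros s a b Hs Ha Hb. unfold fu. destruct (decP _) as [H|H].
      - destruct (constructive_indefinite_description _ H) as [s' [Hs' [Ha' Hb']]]. simpl.
        destruct (HCh' s s' Hs Hs') as [[_ E]|[_ E]]; auto. symmetry; auto.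
      - exfalso. apply H. eauto. }
    assert (Hcommon : forall a b, Au a -> Au b -> exists s, Ch' s /\ (proj1_sig s).1 a /\ (proj1_sig s).1 b).
    { intros a b [s [Hs Ha]] [t [Ht Hb]]. destruct (HCh' s t Hs Ht) as [[E _]|[E _]].
      - exists t. auto.
      - exists s. auto. }
    assert (Hu : hinv Au fu).
    { constructor.
      - intros x Hx. exists base. split; [right; auto|exact Hx].
      - intros a b Ha Hb. rewrite (Hfu base); auto. right; auto.
      - intros a b Ha Hb. destruct (Hcommon a b Ha Hb) as [s [Hs [Ha' Hb']]].
        rewrite (Hfu s); auto. exists s. split; auto. exact (hc (proj2_sig s) Ha' Hb').
      - intros a b a' b' Ha Hb Ha' Hb'.
        destruct (Hcommon a b Ha Hb) as [s [Hs [Ha1 Hb1]]].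
        destruct (Hcommon a' b' Ha' Hb') as [t [Ht [Ha2 Hb2]]].
        rewrite (Hfu s) // (Hfu t) //.
        destruct (HCh' s t Hs Ht) as [[E1 E2]|[E1 E2]].
        + rewrite -E2 //. apply (hi (proj2_sig t)); auto.
        + rewrite -(E2 a' b') //. apply (hi (proj2_sig s)); auto. }
    exists (exist _ (Au, fu) Hu). intros s Hs. split; simpl.
    + intros x Hx. exists s. split; auto. left; auto.
    + intros a b Ha Hb. apply Hfu; auto. left; auto.
  - simpl in *. exists A, f. split; auto.
    pose (c0 := iota 0). pose (c1 := iota 1). pose (c2 := iota 2).
    assert (Ac0 : A c0) by (apply (h0 Hf); exists 0; auto).
    assert (Ac1 : A c1) by (apply (h0 Hf); exists 1; auto).
    assert (Ac2 : A c2) by (apply (h0 Hf); exists 2; auto).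
    assert (n01 : c0 <> c1) by (intros E; apply iota_inj in E; discriminate).
    assert (n02 : c0 <> c2) by (intros E; apply iota_inj in E; discriminate).
    assert (n12 : c1 <> c2) by (intros E; apply iota_inj in E; discriminate).
    assert (Hno : ~ exists e : X -> X, (forall a, A a -> ~ A (e a)) /\
        (forall a a', A a -> A a' -> e a = e a' -> a = a')).
    { intros [e [He1 He2]].
      pose (B := fun y => exists a, A a /\ y = e a).
      pose (A' := fun x => A x \/ B x).
      pose (einv := fun y => epsilon (inhabits c0) (fun a => A a /\ e a = y)).
      assert (Heinv : forall y, B y -> A (einv y) /\ e (einv y) = y).
      { intros y [a [Aa ->]]. apply (epsilon_spec (inhabits c0) (fun a' => A a' /\ e a' = e a)). eauto. }
      pose (pi := fun z => if decP (A z) then z else einv z).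
      pose (tag := fun x y => if decP (A x) then c0 else if decP (A y) then c1 else c2).
      pose (f' := fun x y => if decP (A x /\ A y) then f x y else e (f (tag x y) (f (pi x) (pi y)))).
      assert (Api : forall z, A' z -> A (pi z)).
      { intros z Hz; unfold pi; destruct (decP (A z)) as [H|H]; auto. destruct Hz as [Hz|Hz]; [contradiction|apply Heinv; auto]. }
      assert (Atag : forall x y, A (tag x y)).
      { intros x y; unfold tag; destruct (decP (A x)); auto; destruct (decP (A y)); auto. }
      assert (Bnot : forall z, B z -> ~ A z).
      { intros z [a [Aa ->]]. auto. }
      assert (Hf' : hinv A' f').
      { constructor.
        - intros x Hx. left. exact (h0 Hf Hx).
        - intros a b Ha Hb. unfold f'. destruct (decP _) as [Hq|N].
          + exact (hb Hf Ha Hb).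
          + exfalso. apply N. split; apply (h0 Hf); auto.
        - intros a b Ha Hb. unfold f'. destruct (decP _) as [[Ha' Hb']|N].
          + left. exact (hc Hf Ha' Hb').
          + right. eexists. split; [|reflexivity]. apply (hc Hf); auto. apply (hc Hf); auto.
        - assert (EA : forall x y, A x /\ A y -> f' x y = f x y).
          { intros x y H. unfold f'. destruct (decP (A x /\ A y)) as [h|h]; [reflexivity|contradiction]. }
          assert (EB : forall x y, ~ (A x /\ A y) -> f' x y = e (f (tag x y) (f (pi x) (pi y)))).
          { intros x y H. unfold f'. destruct (decP (A x /\ A y)) as [h|h]; [contradiction|reflexivity]. }
          intros a b a' b' Ha Hb Ha' Hb'.
          destruct (classic (A a /\ A b)) as [[Aa Ab]|N1]; destruct (classic (A a' /\ A b')) as [[Aa' Ab']|N2];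
            [rewrite !EA //|rewrite EA // EB //|rewrite EB // EA //|rewrite !EB //].
          + apply (hi Hf); auto.
          + intros E. exfalso. apply (He1 (f (tag a' b') (f (pi a') (pi b')))).
            * apply (hc Hf); auto. apply (hc Hf); auto.
            * rewrite -E. apply (hc Hf); auto.
          + intros E. exfalso. apply (He1 (f (tag a b) (f (pi a) (pi b)))).
            * apply (hc Hf); auto. apply (hc Hf); auto.
            * rewrite E. apply (hc Hf); auto.
          + intros E. apply He2 in E; try (apply (hc Hf); auto; apply (hc Hf); auto).
            apply (hi Hf) in E; auto; try (apply (hc Hf); auto).
            destruct E as [Et E]. apply (hi Hf) in E; auto. destruct E as [Ea Eb].
            assert (piA : forall z, A z -> pi z = z).
            { intros z Hz; unfold pi; destruct (decP (A z)) as [h|h]; [reflexivity|contradiction]. }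
            assert (piB : forall z, A' z -> ~ A z -> e (pi z) = z).
            { intros z Hz Nz; unfold pi; destruct (decP (A z)) as [h|h]; [contradiction|].
              destruct Hz as [Hz|Hz]; [contradiction|apply Heinv; auto]. }
            assert (tag0 : forall x y, A x -> tag x y = c0).
            { intros x y Hx; unfold tag; destruct (decP (A x)) as [h|h]; [reflexivity|contradiction]. }
            assert (tag1 : forall x y, ~ A x -> A y -> tag x y = c1).
            { intros x y Hx Hy; unfold tag; destruct (decP (A x)) as [h|h]; [contradiction|].
              destruct (decP (A y)) as [h'|h']; [reflexivity|contradiction]. }
            assert (tag2 : forall x y, ~ A x -> ~ A y -> tag x y = c2).
            { intros x y Hx Hy; unfold tag; destruct (decP (A x)) as [h|h]; [contradiction|].
              destruct (decP (A y)) as [h'|h']; [contradiction|reflexivity]. }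
            assert (same : forall x x', A' x -> A' x' -> (A x <-> A x') -> pi x = pi x' -> x = x').
            { intros x x' Hx Hx' Hiff Hp. destruct (classic (A x)) as [Ax|Ax].
              - rewrite -(piA x Ax) -(piA x') ?Hp //. tauto.
              - rewrite -(piB x Hx Ax) -(piB x' Hx') ?Hp //. tauto. }
            assert (Hpat : (A a <-> A a') /\ (A b <-> A b')).
            { destruct (classic (A a)) as [Xa|Xa]; destruct (classic (A a')) as [Xa'|Xa'];
              destruct (classic (A b)) as [Xb|Xb]; destruct (classic (A b')) as [Xb'|Xb'];
              try tauto;
              repeat match goal with
                | H : A ?x, E : context[tag ?x ?y] |- _ => rewrite (tag0 x y H) in E
                | H : ~ A ?x, H2 : A ?y, E : context[tag ?x ?y] |- _ => rewrite (tag1 x y H H2) in E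
                | H : ~ A ?x, H2 : ~ A ?y, E : context[tag ?x ?y] |- _ => rewrite (tag2 x y H H2) in E
              end; exfalso; congruence. }
            split; apply same; tauto. }
      have := Hmax (exist _ (A', f') Hf'). simpl. intros HH.
      destruct HH as [Hsub _].
      + split; simpl.
        * intros x Hx. left; auto.
        * intros a b Ha Hb. unfold f'. destruct (decP _) as [Hq|N]; auto. exfalso; tauto.
      + apply (He1 c0 Ac0). apply Hsub. right. exists c0. auto. }
    destruct (card_total {x | A x} {x | ~ A x}) as [[g Hg]|[h Hh]].
    + exfalso. apply Hno.
      exists (fun x => match decP (A x) with left H => proj1_sig (g (exist _ x H)) | right _ => x end).
      split.
      * intros a Aa. destruct (decP (A a)) as [H|H]; [|contradiction]. exact (proj2_sig (g _)).
      * intros a a' Aa Aa'. destruct (decP (A a)) as [H|H]; [|contradiction].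
        destruct (decP (A a')) as [H'|H']; [|contradiction].
        intros E. apply sig_eq in E. apply Hg in E. injection E. auto.
    + pose (j := fun x => match decP (A x) with left _ => f c0 x | right H => f c1 (proj1_sig (h (exist _ x H))) end).
      assert (Aj : forall x, A (j x)).
      { intros x. unfold j. destruct (decP (A x)) as [H|H]; apply (hc Hf); auto. exact (proj2_sig (h _)). }
      exists (fun x => exist A (j x) (Aj x)).
      intros x y E. injection E. unfold j. clear E.
      destruct (decP (A x)) as [Hx|Hx]; destruct (decP (A y)) as [Hy|Hy]; intros E.
      * apply (hi Hf) in E; auto. tauto.
      * apply (hi Hf) in E; auto; [|exact (proj2_sig (h _))]. tauto.
      * apply (hi Hf) in E; auto; [|exact (proj2_sig (h _))]. destruct E as [E _]. congruence.
      * apply (hi Hf) in E; auto; try exact (proj2_sig (h _)). destruct E as [_ E].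
        apply sig_eq in E. apply Hh in E. injection E. auto.
Qed.

End Hess.

Lemma hess (X : Type) : infinite_type X -> card_le (X * X) X.
Proof.
  intros [iota Hi]. destruct (hess_core Hi) as [A [f [Hf [j Hj]]]].
  exists (fun p => f (proj1_sig (j p.1)) (proj1_sig (j p.2))).
  intros [x y] [x' y'] E. simpl in E.
  apply (hi Hf) in E; try exact (proj2_sig (j _)).
  destruct E as [E1 E2]. apply sig_eq in E1. apply sig_eq in E2. apply Hj in E1. apply Hj in E2. congruence.
Qed.


Lemma seq_le (X : Type) : infinite_type X -> card_le (seq X) X.
Proof.
  intros Hinf. destruct (hess Hinf) as [P HP]. destruct Hinf as [iota Hi].
  pose (g := fix g (l : seq X) : X := match l with nil => iota 0 | x :: l' => P (x, g l') end).
  exists (fun l => P (iota (size l), g l)).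
  intros l1 l2 E. apply HP in E. injection E as E1 E2. apply Hi in E1.
  revert l2 E1 E2. induction l1 as [|x l1 IH]; intros [|y l2] E1 E2; try discriminate; auto.
  simpl in E2. apply HP in E2. injection E2 as -> E2. injection E1 as E1. f_equal. apply IH; auto.
Qed.

Lemma sum_le (X K1 K2 : Type) : infinite_type X -> card_le K1 X -> card_le K2 X -> card_le (K1 + K2) X.
Proof.
  intros Hinf [h1 H1] [h2 H2]. destruct (hess Hinf) as [P HP]. destruct Hinf as [iota Hi].
  exists (fun z => match z with inl k => P (iota 0, h1 k) | inr k => P (iota 1, h2 k) end).
  intros [k|k] [k'|k'] E; apply HP in E; have E1 := f_equal fst E; have E2 := f_equal snd E;
    simpl in E1, E2.
  - f_equal; auto.
  - apply Hi in E1; discriminate.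
  - apply Hi in E1; discriminate.
  - f_equal; auto.
Qed.

Lemma finite_or_infinite (X : Type) : infinite_type X \/ exists l : list X, forall x, List.In x l.
Proof.
  destruct (classic (exists l : list X, forall x, List.In x l)) as [H|H]; [right; auto|left].
  assert (Hn : forall l : list X, exists x, ~ List.In x l).
  { intros l. apply NNPP; intros N. apply H. exists l. intros x. apply NNPP; intros N'. apply N. eauto. }
  destruct (Hn nil) as [x0 _].
  pose (pick := fun l : list X => epsilon (inhabits x0) (fun x => ~ List.In x l)).
  assert (Hpick : forall l, ~ List.In (pick l) l).
  { intros l. apply (epsilon_spec (inhabits x0) (fun x => ~ List.In x l)). apply Hn. }
  pose (g := fix g (n : nat) : list X := match n with 0 => nil | S n => pick (g n) :: g n end).
  assert (Hin : forall m k, List.In (pick (g m)) (g (S m + k))).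
  { intros m k. induction k as [|k IH].
    - rewrite addn0. simpl. left; auto.
    - rewrite addnS. simpl. right. exact IH. }
  exists (fun n => pick (g n)). intros m n E.
  destruct (ltngtP m n) as [Hlt|Hlt|Heq]; auto; exfalso.
  - apply (Hpick (g n)). rewrite -E. have := Hin m (n - m.+1). rewrite subnKC //.
  - apply (Hpick (g m)). rewrite E. have := Hin n (m - n.+1). rewrite subnKC //.
Qed.

Lemma tc (I A : Type) (lt : I -> I -> Prop) (wf : well_founded lt) (a0 : A)
  (Q : I -> (I -> A) -> A -> Prop) :
  (forall i f g, (forall j, lt j i -> f j = g j) -> forall a, Q i f a -> Q i g a) ->
  (forall i f, (forall j, lt j i -> Q j f (f j)) -> exists a, Q i f a) ->
  exists f, forall i, Q i f (f i).
Proof.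
  intros Hloc Hex.
  pose (ext := fun i (rec : forall j, lt j i -> A) (j : I) =>
     match decP (lt j i) with left H => rec j H | right _ => a0 end).
  pose (step := fun i (rec : forall j, lt j i -> A) => epsilon (inhabits a0) (fun a => Q i (ext i rec) a)).
  pose (f := Fix wf (fun _ => A) step).
  assert (Hfix : forall i, f i = step i (fun j _ => f j)).
  { intros i. unfold f. refine (@Fix_eq I lt wf (fun _ => A) step _ i). intros x g1 g2 Hg. unfold step.
    replace (ext x g1) with (ext x g2); [reflexivity|].
    apply functional_extensionality. intros j. unfold ext.
    destruct (decP (lt j x)); auto. }
  assert (Hext : forall i j, lt j i -> ext i (fun j _ => f j) j = f j).
  { intros i j H. unfold ext. destruct (decP (lt j i)); [reflexivity|contradiction]. }
  exists f. intros i. induction (wf i) as [i _ IH].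
  destruct (Hex i f IH) as [a Ha].
  assert (Q i (ext i (fun j _ => f j)) (step i (fun j _ => f j))).
  { unfold step. apply (epsilon_spec (inhabits a0) (fun a => Q i (ext i (fun j _ => f j)) a)).
    exists a. apply (Hloc i f); auto. intros j Hj. symmetry. apply Hext; auto. }
  rewrite Hfix. apply (Hloc i (ext i (fun j _ => f j))); auto.
Qed.


Lemma inj_fun (U V : Type) (v0 : V) (D : U -> Prop) (B : V -> Prop) :
  card_le {x | D x} {y | B y} ->
  exists h : U -> V, (forall u, D u -> B (h u)) /\ (forall u u', D u -> D u' -> h u = h u' -> u = u').
Proof.
  intros [g Hg].
  exists (fun u => match decP (D u) with left H => proj1_sig (g (exist _ u H)) | right _ => v0 end).
  split.
  - intros u Du. destruct (decP (D u)) as [H|H]; [exact (proj2_sig _)|contradiction].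
  - intros u u' Du Du'. destruct (decP (D u)) as [H|H]; [|contradiction].
    destruct (decP (D u')) as [H'|H']; [|contradiction].
    intros E. apply sig_eq in E. apply Hg in E. injection E. auto.
Qed.

Lemma fun_inj (U V : Type) (D : U -> Prop) (B : V -> Prop) (h : U -> V) :
  (forall u, D u -> B (h u)) -> (forall u u', D u -> D u' -> h u = h u' -> u = u') ->
  card_le {x | D x} {y | B y}.
Proof.
  intros H1 H2. exists (fun x => exist B (h (proj1_sig x)) (H1 _ (proj2_sig x))).
  intros [x px] [y py] E. injection E. intros E'. apply sig_eq. simpl. apply H2; auto.
Qed.

Lemma nat_inj (T : Type) (P : T -> Prop) (rel : T -> T -> Prop) :
  (exists x, P x) -> (forall x, P x -> exists y, P y /\ rel x y) ->
  (forall x y z, P x -> P y -> P z -> rel x y -> rel y z -> rel x z) -> (forall x, P x -> ~ rel x x) ->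
  card_le nat {x | P x}.
Proof.
  intros [x0 Px0] Hn Htr Hirr.
  pose (nxt := fun x => epsilon (inhabits x0) (fun y => P y /\ rel x y)).
  assert (Hnxt : forall x, P x -> P (nxt x) /\ rel x (nxt x)).
  { intros x Px. apply (epsilon_spec (inhabits x0) (fun y => P y /\ rel x y)). auto. }
  pose (s := fix s (n : nat) : T := match n with 0 => x0 | S n => nxt (s n) end).
  assert (Ps : forall n, P (s n)) by (intros n; induction n; simpl; [auto|apply Hnxt; auto]).
  assert (Hinc : forall m k, rel (s m) (s (S (m + k)))).
  { intros m k. induction k as [|k IH].
    - rewrite addn0. apply Hnxt. auto.
    - rewrite addnS. change (rel (s m) (nxt (s (S (m + k))))).
      apply (Htr _ (s (S (m + k))) _ (Ps m) (Ps _)); auto.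
      + change (P (s (S (S (m + k))))). apply Ps.
      + apply Hnxt. apply Ps. }
  exists (fun n => exist P (s n) (Ps n)). intros m n E. injection E. intros E'.
  destruct (ltngtP m n) as [Hlt|Hlt|Heq]; auto; exfalso.
  - apply (Hirr (s m) (Ps m)). have := Hinc m (n - m.+1). rewrite -addSn subnKC // -E' //.
  - apply (Hirr (s n) (Ps n)). have := Hinc n (m - n.+1). rewrite -addSn subnKC // E' //.
Qed.

Section GC.
Variables (U : Type) (r : U -> U -> Prop) (C : U -> Prop).
Hypotheses (rrefl : forall a, C a -> r a a)
  (rtrans : forall a b c, C a -> C b -> C c -> r a b -> r b c -> r a c)
  (rtot : forall a b, C a -> C b -> r a b \/ r b a)
  (Cne : exists a, C a)
  (Cnomax : forall a, C a -> exists b, C b /\ ~ r b a).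

Definition cof_ok (Rec : U -> Prop) :=
  (forall x, Rec x -> C x) /\ cofinal r C Rec /\
  (forall D, (forall x, D x -> C x) -> cofinal r C D -> card_le {x | Rec x} {x | D x}) /\
  (exists K : initial_ordinal, exists s : K -> U,
     (forall i, Rec (s i)) /\ (forall i j, io_lt i j -> r (s i) (s j) /\ s i <> s j) /\
     card_le K {x | Rec x} /\ (forall x, Rec x -> exists i, s i = x)) /\
  infinite_type {x | Rec x}.

Lemma gc : exists Rec, cof_ok Rec.
Proof.
  destruct Cne as [c0 Cc0].
  pose (Cs := {x | C x}).
  pose (cs0 := exist C c0 Cc0 : Cs).
  destruct (wo_exists Cs) as [lt Hwo].
  destruct Hwo as [wf [ltr ltt]] eqn:EHwo.
  pose (below := fun (j : option Cs) (k : Cs) => match j with None => True | Some j' => lt k j' end).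
  pose (olt := fun (a b : option Cs) => match a, b with
     | Some a', None => True | Some a', Some b' => lt a' b' | _, _ => False end).
  assert (owf : well_founded olt).
  { assert (HS : forall a, Acc olt (Some a)).
    { intros a. induction (wf a) as [a _ IH]. constructor. intros [b|]; simpl; [|contradiction].
      intros H. apply IH; auto. }
    intros [a|]; auto. constructor. intros [b|]; simpl; [auto|contradiction]. }
  pose (F := fun j => exists D, (forall x, D x -> C x) /\ cofinal r C D /\ card_le {x | D x} {k | below j k}).
  assert (FN : F None).
  { exists C. split; [auto|split].
    - intros a Ca. exists a. split; auto.
    - exists (fun x => exist (below None) (exist C (proj1_sig x) (proj2_sig x)) I).
      intros [x px] [y py] E. injection E. intros E'. apply sig_eq. auto. }
  destruct (@wf_min _ _ owf F (ex_intro _ None FN)) as [j0 [[D0 [D0C [D0cof D0le]]] j0min]].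
  destruct (inj_fun cs0 D0le) as [hU [hUb hUi]].
  pose (Rec := fun x => D0 x /\ forall y, D0 y -> lt (hU y) (hU x) -> r y x /\ ~ r x y).
  assert (RecC : forall x, Rec x -> C x) by (intros x [Hx _]; auto).
  assert (Rcof : cofinal r C Rec).
  { intros a Ca. destruct (D0cof a Ca) as [d [Dd Had]].
    destruct (@wf_min _ _ wf (fun k => exists d, D0 d /\ r a d /\ hU d = k) (ex_intro _ _ (ex_intro _ d (conj Dd (conj Had erefl)))))
      as [k [[d' [Dd' [Had' <-]]] kmin]].
    exists d'. split; auto. split; auto.
    intros y Dy Hlt.
    assert (Nay : ~ r a y) by (intros H; apply (kmin _ Hlt); exists y; auto).
    assert (rya : r y a) by (destruct (rtot (D0C y Dy) Ca); tauto).
    split.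
    - apply (rtrans (D0C y Dy) Ca (D0C d' Dd')); auto.
    - intros H. apply Nay. apply (rtrans Ca (D0C d' Dd') (D0C y Dy)); auto. }
  assert (rec_lt : forall x y, Rec x -> Rec y -> r x y -> ~ r y x -> lt (hU x) (hU y)).
  { intros x y [Dx Rx] [Dy Ry] Hxy Hyx.
    destruct (ltt (hU x) (hU y)) as [H|[H|H]]; auto; exfalso.
    - apply hUi in H; auto. subst. apply Hyx. apply rrefl. auto.
    - destruct (Rx y Dy H) as [_ N]. auto. }
  assert (lt_rec : forall x y, Rec x -> Rec y -> lt (hU x) (hU y) -> r x y /\ ~ r y x).
  { intros x y Rx [Dy Ry] H. apply Ry; auto. destruct Rx; auto. }
  assert (Rmin : forall D, (forall x, D x -> C x) -> cofinal r C D -> card_le {x | Rec x} {x | D x}).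
  { intros D DC Dcof.
    assert (RD0 : card_le {x | Rec x} {x | D0 x}) by (apply card_le_sub; intros x [Hx _]; auto).
    assert (D0seg : card_le {x | D0 x} {k | below j0 k}) by auto.
    assert (JD : card_le {k : Cs | D (proj1_sig k)} {x | D x}).
    { exists (fun k => exist D (proj1_sig (proj1_sig k)) (proj2_sig k)).
      intros [[x px] dx] [[y py] dy] E. injection E. intros E'. subst. apply sig_eq. simpl. apply sig_eq. auto. }
    assert (DJ : card_le {x | D x} {k : Cs | D (proj1_sig k)}).
    { exists (fun x => exist (fun k : Cs => D (proj1_sig k)) (exist C (proj1_sig x) (DC _ (proj2_sig x))) (proj2_sig x)).
      intros [x px] [y py] E. injection E. intros E'. apply sig_eq. auto. }
    destruct (@seg_lemma Cs lt (conj wf (conj ltr ltt)) (fun k => D (proj1_sig k))) as [[j [H1 H2]]|H1].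
    - assert (FS : F (Some j)).
      { exists D. split; auto. split; auto. eapply card_le_trans; [exact DJ|]. exact H1. }
      assert (Hsub : forall k, below j0 k -> below (Some j) k).
      { destruct j0 as [j'|]; simpl.
        - intros k Hk. destruct (ltt j j') as [H|[H|H]].
          + exfalso. apply (j0min (Some j)); auto.
          + subst; auto.
          + eauto.
        - exfalso. apply (j0min (Some j)); simpl; auto. }
      eapply card_le_trans; [exact RD0|]. eapply card_le_trans; [exact D0seg|].
      eapply card_le_trans; [apply card_le_sub; exact Hsub|]. eapply card_le_trans; [exact H2|exact JD].
    - eapply card_le_trans; [exact RD0|]. eapply card_le_trans; [exact D0seg|].
      eapply card_le_trans; [apply card_le_sig|]. eapply card_le_trans; [exact H1|exact JD]. }
  exists Rec. split; [auto|split; [auto|split; [auto|split]]].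
  - pose (K := {x | Rec x}).
    pose (klt := fun a b : K => r (proj1_sig a) (proj1_sig b) /\ ~ r (proj1_sig b) (proj1_sig a)).
    assert (kwf : well_founded klt).
    { apply (@wf_incl _ klt (fun a b : K => lt (hU (proj1_sig a)) (hU (proj1_sig b)))).
      - intros [a pa] [b pb] [H1 H2]. simpl. apply rec_lt; auto.
      - apply (wf_inverse_image K Cs lt (fun a => hU (proj1_sig a)) wf). }
    assert (ktr : forall a b c, klt a b -> klt b c -> klt a c).
    { intros [a pa] [b pb] [c pc] [H1 H2] [H3 H4]. simpl in *. split.
      - apply (rtrans (RecC _ pa) (RecC _ pb) (RecC _ pc)); auto.
      - intros H. apply H2. apply (rtrans (RecC _ pb) (RecC _ pc) (RecC _ pa)); auto. }
    assert (ktot : forall a b, klt a b \/ a = b \/ klt b a).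
    { intros [a pa] [b pb]. unfold klt; simpl.
      destruct (ltt (hU a) (hU b)) as [H|[H|H]].
      - left. apply lt_rec; auto.
      - right; left. apply sig_eq. simpl. apply hUi; auto; [destruct pa|destruct pb]; auto.
      - right; right. apply lt_rec; auto. }
    assert (kinit : forall i, ~ card_le K {j | klt j i}).
    { intros [i pi] Hle.
      assert (H1 : card_le {j | klt j (exist Rec i pi)} {k | below (Some (hU i)) k}).
      { exists (fun j => exist (below (Some (hU i))) (hU (proj1_sig (proj1_sig j)))
           (rec_lt _ _ (proj2_sig (proj1_sig j)) pi (proj1 (proj2_sig j)) (proj2 (proj2_sig j)))).
        intros [[a pa] Ha] [[b pb] Hb] E. injection E. intros E'. simpl in E'.
        apply sig_eq. apply sig_eq. simpl. apply hUi; auto; [destruct pa|destruct pb]; auto. }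
      apply (j0min (Some (hU i))).
      - destruct j0 as [j'|]; simpl; auto. exact (hUb i (proj1 pi)).
      - exists Rec. split; auto. split; auto.
        eapply card_le_trans; [exact Hle|exact H1]. }
    exists (@InitialOrdinal K klt kwf ktr ktot kinit).
    exists (fun a => proj1_sig a). simpl. split; [|split; [|split]].
    + intros [a pa]; auto.
    + intros [a pa] [b pb] [H1 H2]. simpl in *. split; auto. intros ->. apply H2. apply rrefl. auto.
    + apply card_le_refl.
    + intros x Rx. exists (exist Rec x Rx). auto.
  - apply (@nat_inj _ Rec (fun a b => r a b /\ ~ r b a)).
    + destruct (Rcof c0 Cc0) as [d [Rd _]]. eauto.
    + intros a Ra. destruct (Cnomax (RecC _ Ra)) as [b [Cb Nba]].
      destruct (Rcof b Cb) as [c [Rc Hbc]]. exists c. split; auto.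
      assert (rab : r a b) by (destruct (rtot (RecC _ Ra) Cb); tauto).
      split.
      * apply (rtrans (RecC _ Ra) Cb (RecC _ Rc)); auto.
      * intros H. apply Nba. apply (rtrans Cb (RecC _ Rc) (RecC _ Ra)); auto.
    + intros a b c Ra Rb Rc [H1 H2] [H3 H4]. split.
      * apply (rtrans (RecC _ Ra) (RecC _ Rb) (RecC _ Rc)); auto.
      * intros H. apply H2. apply (rtrans (RecC _ Rb) (RecC _ Rc) (RecC _ Ra)); auto.
    + intros a Ra [H1 H2]. auto.
Qed.

End GC.


Section Syn.
Variables (L : vocab) (D : Type) (N : structure L D).

Lemma eval_ext (t : term L) : forall k (v w : nat -> D), scoped_term k t ->
  (forall i, i < k -> v i = w i) -> eval N v t = eval N w t.
Proof.
  induction t as [i|f a IH]; intros k v w Hs Hvw; simpl in *.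
  - apply Hvw. exact Hs.
  - f_equal. apply functional_extensionality. intros o. apply (IH o k); auto.
Qed.

Lemma sat_ext (phi : formula L) : forall k (v w : nat -> D), scoped k phi ->
  (forall i, i < k -> v i = w i) -> (sat N v phi <-> sat N w phi).
Proof.
  induction phi as [t1 t2|rr a|p IH|p IH q IH'|p IH q IH'|p IH q IH'|p IH|p IH];
    intros k v w Hs Hvw; simpl in *.
  - rewrite (eval_ext (proj1 Hs) Hvw) (eval_ext (proj2 Hs) Hvw). tauto.
  - replace (fun k0 => eval N v (a k0)) with (fun k0 => eval N w (a k0)); [tauto|].
    apply functional_extensionality. intros o. symmetry. apply (eval_ext (Hs o) Hvw).
  - rewrite (IH k v w Hs Hvw). tauto.
  - rewrite (IH k v w (proj1 Hs) Hvw) (IH' k v w (proj2 Hs) Hvw). tauto.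
  - rewrite (IH k v w (proj1 Hs) Hvw) (IH' k v w (proj2 Hs) Hvw). tauto.
  - rewrite (IH k v w (proj1 Hs) Hvw) (IH' k v w (proj2 Hs) Hvw). tauto.
  - split; intros [d Hd]; exists d; [rewrite -(IH k.+1 (scons d v) (scons d w))|rewrite (IH k.+1 (scons d v) (scons d w))]; auto;
      intros [|i] Hi; simpl; auto.
  - split; intros Hd d; [rewrite -(IH k.+1 (scons d v) (scons d w))|rewrite (IH k.+1 (scons d v) (scons d w))]; auto;
      intros [|i] Hi; simpl; auto.
Qed.

Lemma eval_ren (rho : nat -> nat) (t : term L) : forall v : nat -> D,
  eval N v (ren_term rho t) = eval N (fun i => v (rho i)) t.
Proof.
  induction t as [i|f a IH]; intros v; simpl; auto.
  f_equal. apply functional_extensionality. intros o. apply IH.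
Qed.

Lemma sat_ren (phi : formula L) : forall (rho : nat -> nat) (v : nat -> D),
  sat N v (ren rho phi) <-> sat N (fun i => v (rho i)) phi.
Proof.
  induction phi as [t1 t2|rr a|p IH|p IH q IH'|p IH q IH'|p IH q IH'|p IH|p IH];
    intros rho v; simpl.
  - rewrite !eval_ren. tauto.
  - replace (fun k => eval N v (ren_term rho (a k))) with (fun k => eval N (fun i => v (rho i)) (a k)); [tauto|].
    apply functional_extensionality. intros o. symmetry. apply eval_ren.
  - rewrite IH. tauto.
  - rewrite IH IH'. tauto.
  - rewrite IH IH'. tauto.
  - rewrite IH IH'. tauto.
  - assert (E : forall d, (fun i => scons d v (up rho i)) = scons d (fun i => v (rho i))).
    { intros d. apply functional_extensionality. intros [|i]; reflexivity. }
    split; intros [d Hd]; exists d; [rewrite -E -IH|rewrite IH E]; auto.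
  - assert (E : forall d, (fun i => scons d v (up rho i)) = scons d (fun i => v (rho i))).
    { intros d. apply functional_extensionality. intros [|i]; reflexivity. }
    split; intros Hd d; [rewrite -E -IH|rewrite IH E]; auto.
Qed.

Definition pand (q1 q2 : pformula L D) : pformula L D :=
  PForm (fAnd (pf_phi q1) (ren (shift_by (pf_n q1)) (pf_phi q2))) (cat_tuple (pf_par q1) (pf_par q2)).

Lemma pand_sem (q1 q2 : pformula L D) (b : D) : scoped (pf_n q1).+1 (pf_phi q1) ->
  (pholds N b (pand q1 q2) <-> pholds N b q1 /\ pholds N b q2).
Proof.
  destruct q1 as [n1 phi1 a1]. destruct q2 as [n2 phi2 a2]. simpl. intros Hs.
  unfold pholds, pand, holds. simpl.
  assert (E1 : forall i, i < n1.+1 -> scons b (fun j => nth b (a1 ++ a2) j) i = scons b (fun j => nth b a1 j) i).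
  { intros [|i] Hi; simpl; auto. rewrite nth_cat size_tuple. rewrite ltnS in Hi. rewrite Hi. reflexivity. }
  rewrite (sat_ext Hs E1).
  rewrite sat_ren.
  replace (fun i => scons b (fun j => nth b (a1 ++ a2) j) (shift_by n1 i)) with (scons b (fun j => nth b a2 j)).
  - tauto.
  - apply functional_extensionality. intros [|i]; simpl; auto.
    rewrite nth_cat size_tuple. rewrite ltnNge leq_addr /=. rewrite addKn. reflexivity.
Qed.

Fixpoint conjl (q : pformula L D) (l : seq (pformula L D)) : pformula L D :=
  match l with nil => q | q' :: l' => pand q (conjl q' l') end.

End Syn.


Lemma swo_sub (I : Type) (lt : I -> I -> Prop) (P : I -> Prop) : swo lt ->
  swo (fun a b : {j | P j} => lt (proj1_sig a) (proj1_sig b)).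
Proof.
  intros [wf [tr tot]]. split; [|split].
  - apply (wf_inverse_image _ _ lt (fun a : {j | P j} => proj1_sig a) wf).
  - intros a b c; eauto.
  - intros a b. destruct (tot (proj1_sig a) (proj1_sig b)) as [H|[H|H]]; auto.
    right; left. apply sig_eq. auto.
Qed.

Lemma cof_has (U : Type) (r : U -> U -> Prop) (C Rec : U -> Prop) : cof_ok r C Rec ->
  has_cof r C {x | Rec x}.
Proof.
  intros [RC [Rcof [Rmin _]]]. split.
  - exists Rec. split; auto. split; auto. split; apply card_le_refl.
  - intros D DC Dcof. apply Rmin; auto.
Qed.

Section RSPsec.
Variables (L : vocab) (D : Type) (N : structure L D) (U : Type) (TT : U -> Prop)
  (le : U -> U -> Prop) (rt : U) (Delta : nat -> formula L -> Prop) (R : D -> U -> Prop)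
  (F : forall n : nat, formula L -> U -> n.-tuple D -> U).
Hypothesis Hr : RSP N TT le rt Delta R F.
Variable p : pformula L D -> Prop.
Hypothesis HpD : forall q, p q -> Delta (pf_n q) (pf_phi q).
Hypothesis Hfs : fin_sat N p.

Definition inD (q : pformula L D) := Delta (pf_n q) (pf_phi q).
Definition plist (P : pformula L D -> Prop) (l : seq (pformula L D)) := forall q, List.In q l -> P q.

Lemma conjl_D (l : seq (pformula L D)) : forall q, inD q -> plist inD l -> inD (conjl q l).
Proof.
  induction l as [|q' l IH]; intros q Hq Hl; simpl; auto.
  unfold inD, pand; simpl. apply (rsp_conj Hr); auto.
  apply IH. apply Hl; left; auto. intros x Hx; apply Hl; right; auto.
Qed.

Lemma conjl_sem (l : seq (pformula L D)) : forall q b, inD q -> plist inD l ->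
  (pholds N b (conjl q l) <-> pholds N b q /\ plist (pholds N b) l).
Proof.
  induction l as [|q' l IH]; intros q b Hq Hl; simpl.
  - split; [intros H; split; auto; intros x []|tauto].
  - rewrite pand_sem. 2: { apply (rsp_scoped Hr). exact Hq. }
    rewrite IH. 2: { apply Hl; left; auto. } 2: { intros x Hx; apply Hl; right; auto. }
    unfold plist; simpl. split.
    + intros [H1 [H2 H3]]. split; auto. intros x [<-|Hx]; auto.
    + intros [H1 H2]. auto.
Qed.

Definition meets (t : U) (l : seq (pformula L D)) := exists b, R b t /\ plist (pholds N b) l.
Definition good (t : U) := TT t /\ forall l, plist p l -> meets t l.

Lemma TTle_trans a b c : TT a -> TT b -> TT c -> le a b -> le b c -> le a c.
Proof. intros. apply (rsp_trans Hr) with b; auto. Qed.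

Lemma good_rt : good rt.
Proof.
  split; [exact (rsp_rt Hr)|]. intros l Hl. destruct (Hfs Hl) as [b Hb].
  exists b. split; [apply (rsp_R_rt Hr)|]. intros q Hq; auto.
Qed.

Lemma meets_mono s t l : TT s -> TT t -> le s t -> meets t l -> meets s l.
Proof.
  intros Hs Ht Hst [b [Rb Hb]]. exists b. split; auto. exact (rsp_R_mono Hr Hs Ht Hst Rb).
Qed.

Lemma refine_good t q : good t -> p q -> exists t', TT t' /\ le t t' /\ good t' /\
  forall b, R b t' -> pholds N b q.
Proof.
  intros [Tt Gt] pq.
  destruct (Gt [:: q]) as [b0 [Rb0 Hb0]]. { intros x [<-|[]]; auto. }
  destruct (rsp_refine Hr Tt (HpD pq) (a := pf_par q)) as [t' [Tt' Htt' Ht']].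
  { exists b0. split; auto. apply Hb0. left; auto. }
  exists t'. split; auto. split; auto. split.
  - split; auto. intros l Hl.
    destruct (Gt (q :: l)) as [b [Rb Hb]].
    { intros x [<-|Hx]; auto. }
    exists b. split.
    + apply Ht'. split; auto. apply Hb. left; auto.
    + intros x Hx. apply Hb. right; auto.
  - intros b Rb. apply Ht' in Rb. apply Rb.
Qed.

Definition Fl (u : U) (q0 : pformula L D) (l : seq (pformula L D)) : U :=
  @F (pf_n (conjl q0 l)) (pf_phi (conjl q0 l)) u (pf_par (conjl q0 l)).

Lemma Fl_spec u q0 l : TT u -> p q0 -> plist p l -> (exists b, plist (pholds N b) (q0 :: l)) ->
  TT (Fl u q0 l) /\ le (Fl u q0 l) u /\ meets (Fl u q0 l) (q0 :: l) /\
  forall t, TT t -> le t u -> meets t (q0 :: l) -> le t (Fl u q0 l).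
Proof.
  intros Tu pq0 pl [b0 Hb0].
  assert (iq0 : inD q0) by (apply HpD; auto).
  assert (il : plist inD l) by (intros x Hx; apply HpD; apply pl; auto).
  assert (Hsem : forall b, pholds N b (conjl q0 l) <-> plist (pholds N b) (q0 :: l)).
  { intros b. rewrite conjl_sem //. unfold plist; simpl. split.
    - intros [H1 H2] x [<-|Hx]; auto.
    - intros H. split; auto. }
  destruct (rsp_F Hr (conjl_D iq0 il) Tu (a := pf_par (conjl q0 l))) as [H1 H2 H3 H4].
  { exists b0. apply Hsem. auto. }
  split; auto. split; auto. split.
  - destruct H3 as [b [Rb Hb]]. exists b. split; auto. apply Hsem. exact Hb.
  - intros t Tt Htu [b [Rb Hb]]. apply H4; auto. exists b. split; auto. apply Hsem. auto.
Qed.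

Lemma lift_list (l : seq (pformula L D)) : plist p l -> exists beta : seq {q | p q},
  map (fun x => proj1_sig x) beta = l.
Proof.
  induction l as [|q l IH]; intros Hl.
  - exists nil. auto.
  - destruct IH as [beta Hb]. { intros x Hx; apply Hl; right; auto. }
    exists (exist p q (Hl q (or_introl erefl)) :: beta). simpl. rewrite Hb. auto.
Qed.

Lemma map_plist (beta : seq {q | p q}) : plist p (map (fun x => proj1_sig x) beta).
Proof.
  induction beta as [|x beta IH]; simpl; intros q Hq; [contradiction|].
  destruct Hq as [<-|Hq]; [exact (proj2_sig x)|auto].
Qed.

Section Bound.
Hypothesis HX : below_kappa TT le {q | p q}.
Hypothesis XInf : infinite_type {q | p q}.
Let X := {q | p q}.

Lemma bound_lemma (I : Type) (ltI : I -> I -> Prop) (HI : swo ltI) (IX : card_le I X)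
  (t : I -> U) (Gt : forall j, good (t j)) (Mt : forall j k, ltI j k -> le (t j) (t k)) :
  exists c, good c /\ forall j, le (t j) c.
Proof.
  destruct HI as [Iwf [Itr Itot]].
  pose (C := fun x => exists j, t j = x).
  assert (CT : forall x, C x -> TT x) by (intros x [j <-]; apply Gt).
  assert (Crefl : forall a, C a -> le a a) by (intros a Ca; apply (rsp_refl Hr); auto).
  assert (Ctrans : forall a b c, C a -> C b -> C c -> le a b -> le b c -> le a c).
  { intros a b c Ca Cb Cc; apply (TTle_trans (CT _ Ca) (CT _ Cb) (CT _ Cc)). }
  assert (Ctot : forall a b, C a -> C b -> le a b \/ le b a).
  { intros a b [j <-] [k <-]. destruct (Itot j k) as [H|[E|H]].
    - left; auto.
    - subst; left; apply (rsp_refl Hr); exact (proj1 (Gt _)).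
    - right; auto. }
  assert (CX : card_le {x | C x} X).
  { eapply card_le_trans; [|exact IX]. apply (@card_le_image I U t C). auto. }
  destruct (classic (exists j : I, True)) as [[j0 _]|Hne].
  2: { exists rt. split; [exact good_rt|]. intros j. exfalso. apply Hne. eauto. }
  destruct (classic (exists m, C m /\ forall x, C x -> le x m)) as [[m [[jm <-] Hm]]|Hnm].
  { exists (t jm). split; auto. intros j. apply Hm. exists j; auto. }
  assert (Cnomax : forall a, C a -> exists b, C b /\ ~ le b a).
  { intros a Ca. apply NNPP; intros N1. apply Hnm. exists a. split; auto.
    intros x Cx. apply NNPP; intros N2. apply N1. eauto. }
  assert (Cne : exists a, C a) by (exists (t j0); exists j0; auto).
  destruct (@gc U le C Crefl Ctrans Ctot Cne Cnomax) as [Rec1 Hrec1].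
  assert (Hub : exists u, TT u /\ forall j, le (t j) u).
  { apply NNPP; intros Nub.
    destruct Hrec1 as [RC [Rcof [_ [[K [s [Hs1 [Hs2 [HsK Hsurj]]]]] Rinf]]]].
    destruct HX as [Ht _].
    assert (KX : card_le K X).
    { eapply card_le_trans; [exact HsK|]. eapply card_le_trans; [|exact CX]. apply card_le_sub; auto. }
    assert (Kinf : infinite_type K).
    { eapply card_le_trans; [exact Rinf|]. apply (@card_le_image K U s Rec1). auto. }
    destruct (Ht K Kinf) as [_ NK]; auto.
    exists s. split.
    - split.
      + intros i. apply CT, RC, Hs1.
      + intros i j Hij. exact (Hs2 i j Hij).
    - intros [u [Tu Hu]]. apply Nub. exists u. split; auto.
      intros j. destruct (Rcof (t j) (ex_intro _ j erefl)) as [d [Rd Hd]].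
      destruct (Hsurj d Rd) as [i <-].
      apply (TTle_trans (CT _ (ex_intro _ j erefl)) (CT _ (RC _ Rd)) Tu); auto. }
  destruct Hub as [u [Tu Hu]].
  assert (Gap : forall C2 : U -> Prop, (forall x, C2 x -> TT x) ->
     (forall x y, C2 x -> C2 y -> le x y \/ le y x) -> (forall x j, C2 x -> le (t j) x) ->
     card_le {x | C2 x} X ->
     exists w, TT w /\ (forall j, le (t j) w) /\ forall y, C2 y -> le w y).
  { intros C2 C2T C2tot C2ab C2X.
    destruct (classic (exists y, C2 y)) as [C2ne|C2e].
    2: { exists u. split; auto. split; auto. intros y Hy. exfalso. apply C2e. eauto. }
    destruct (classic (exists m, C2 m /\ forall y, C2 y -> le m y)) as [[m [Cm Hm]]|Hnm2].
    { exists m. split; auto. }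
    apply NNPP; intros Nw.
    pose (r2 := fun a b => le b a).
    assert (C2nomax : forall a, C2 a -> exists b, C2 b /\ ~ r2 b a).
    { intros a Ca. apply NNPP; intros N1. apply Hnm2. exists a. split; auto.
      intros x Cx. apply NNPP; intros N2. apply N1. eauto. }
    destruct (@gc U r2 C2) as [Rec2 Hrec2].
    - intros a Ca. apply (rsp_refl Hr); auto.
    - intros a b c Ca Cb Cc H1 H2. unfold r2 in *. apply (TTle_trans (C2T _ Cc) (C2T _ Cb) (C2T _ Ca)); auto.
    - intros a b Ca Cb. unfold r2. destruct (C2tot a b Ca Cb); auto.
    - exact C2ne.
    - exact C2nomax.
    - destruct HX as [_ Hp].
      assert (K1inf : infinite_type {x | Rec1 x}) by (destruct Hrec1 as [_ [_ [_ [_ H]]]]; exact H).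
      assert (K2inf : infinite_type {x | Rec2 x}) by (destruct Hrec2 as [_ [_ [_ [_ H]]]]; exact H).
      destruct (Hp {x | Rec1 x} {x | Rec2 x} K1inf K2inf) as [_ NK].
      + exists C, C2. split; [|split; [|split; [|split; [|split]]]].
        * intros a [Ha|Ha]; auto.
        * intros a b [Ha|Ha] [Hb|Hb].
          -- apply Ctot; auto.
          -- destruct Ha as [j <-]. left. apply C2ab; auto.
          -- destruct Hb as [j <-]. right. apply C2ab; auto.
          -- apply C2tot; auto.
        * intros a1 a2 [j <-] H2. auto.
        * intros [c [Tc Hc]]. apply Nw. exists c. split; auto. split.
          -- intros j. destruct C2ne as [y Hy]. apply (Hc (t j) y); auto. exists j; auto.
          -- intros y Hy. apply (Hc (t j0) y); auto. exists j0; auto.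
        * apply cof_has. exact Hrec1.
        * apply cof_has. exact Hrec2.
      + apply NK. apply sum_le; auto.
        * eapply card_le_trans; [|exact CX]. apply card_le_sub. destruct Hrec1 as [H _]. exact H.
        * eapply card_le_trans; [|exact C2X]. apply card_le_sub. destruct Hrec2 as [H _]. exact H. }
  destruct (wo_exists (seq X)) as [ltS [Swf [Str Stot]]].
  assert (SX : card_le (seq X) X) by (apply seq_le; auto).
  pose (Q := fun (beta : seq X) (v : seq X -> U) (a : U) =>
     TT a /\ (forall j, le (t j) a) /\ (forall g, ltS g beta -> le a (v g)) /\
     meets a (map (fun x => proj1_sig x) beta)).
  destruct (@tc (seq X) U ltS Swf u Q) as [v Hv].
  - intros beta f g Hfg a [H1 [H2 [H3 H4]]]. split; auto. split; auto. split; auto.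
    intros g' Hg'. rewrite -Hfg; auto.
  - intros beta v IH.
    pose (C2 := fun x => exists g, ltS g beta /\ v g = x).
    assert (A1 : forall x, C2 x -> TT x).
    { intros x [g1 [Hg1 <-]]. exact (proj1 (IH g1 Hg1)). }
    assert (A2 : forall x y, C2 x -> C2 y -> le x y \/ le y x).
    { intros x y [g1 [Hg1 <-]] [g2 [Hg2 <-]]. destruct (Stot g1 g2) as [H|[E|H]].
      * right. destruct (IH g2 Hg2) as [_ [_ [G _]]]. auto.
      * subst g2. left. apply (rsp_refl Hr). exact (proj1 (IH g1 Hg1)).
      * left. destruct (IH g1 Hg1) as [_ [_ [G _]]]. auto. }
    assert (A3 : forall x j, C2 x -> le (t j) x).
    { intros x j [g1 [Hg1 <-]]. destruct (IH g1 Hg1) as [_ [G _]]. auto. }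
    assert (A4 : card_le {x | C2 x} X).
    { eapply card_le_trans; [|exact SX]. apply (@card_le_image (seq X) U v). intros x [g1 [_ <-]]; eauto. }
    destruct (Gap C2 A1 A2 A3 A4) as [w [Tw [Hw1 Hw2]]].
    destruct beta as [|q0 beta'].
      * exists w. split; auto. split; auto. split.
        -- intros g1 Hg1. apply Hw2. exists g1; auto.
        -- destruct (rsp_R_ne Hr Tw) as [b Rb]. exists b. split; auto. intros x [].
      * pose (l := map (fun x => proj1_sig x) beta').
        assert (pl : plist p l) by apply map_plist.
        assert (pq0 : p (proj1_sig q0)) by exact (proj2_sig q0).
        assert (Hmt : forall j, meets (t j) (proj1_sig q0 :: l)).
        { intros j. apply (Gt j). intros x [<-|Hx]; auto. }
        destruct (@Fl_spec w (proj1_sig q0) l Tw pq0 pl) as [F1 [F2 [F3 F4]]].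
        { destruct (Hmt j0) as [b [_ Hb]]. eauto. }
        exists (Fl w (proj1_sig q0) l). split; auto. split; [|split].
        -- intros j. apply F4; auto. apply Gt.
        -- intros g1 Hg1. apply (TTle_trans F1 Tw (proj1 (IH g1 Hg1))); auto. apply Hw2. exists g1; auto.
        -- exact F3.
  - pose (C2 := fun x => exists g, v g = x).
    assert (A1 : forall x, C2 x -> TT x).
    { intros x [g1 <-]. exact (proj1 (Hv g1)). }
    assert (A2 : forall x y, C2 x -> C2 y -> le x y \/ le y x).
    { intros x y [g1 <-] [g2 <-]. destruct (Stot g1 g2) as [H|[E|H]].
      * right. destruct (Hv g2) as [_ [_ [G _]]]. auto.
      * subst g2. left. apply (rsp_refl Hr). exact (proj1 (Hv g1)).
      * left. destruct (Hv g1) as [_ [_ [G _]]]. auto. }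
    assert (A3 : forall x j, C2 x -> le (t j) x).
    { intros x j [g1 <-]. destruct (Hv g1) as [_ [G _]]. auto. }
    assert (A4 : card_le {x | C2 x} X).
    { eapply card_le_trans; [|exact SX]. apply (@card_le_image (seq X) U v). intros x [g1 <-]; eauto. }
    destruct (Gap C2 A1 A2 A3 A4) as [w [Tw [Hw1 Hw2]]].
    exists w. split; auto. split; auto.
      intros l Hl. destruct (lift_list Hl) as [beta <-].
      destruct (Hv beta) as [V1 [_ [_ V4]]].
      apply (@meets_mono w (v beta)); auto. apply Hw2; exists beta; auto.
Qed.

Lemma ext_lemma (ltX : X -> X -> Prop) (HXo : swo ltX) (P : X -> Prop)
  (Pdown : forall j k, P j -> ltX k j -> P k) (t : X -> U)
  (Ht : forall j, P j -> good (t j) /\ (forall k, ltX k j -> le (t k) (t j)) /\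
     (forall k, ltX k j -> forall b, R b (t j) -> pholds N b (proj1_sig k))) :
  exists a, good a /\ (forall j, P j -> le (t j) a) /\
    (forall j, P j -> forall b, R b a -> pholds N b (proj1_sig j)).
Proof.
  destruct HXo as [wf [tr tot]] eqn:EH.
  destruct (classic (exists j, P j)) as [Pne|Pe].
  2: { exists rt. split; [exact good_rt|]. split; intros j Hj; exfalso; apply Pe; eauto. }
  destruct (classic (exists m, P m /\ forall j, P j -> ~ ltX m j)) as [[m [Pm Hm]]|Hnm].
  - destruct (Ht m Pm) as [Gm [Lm Pm']].
    destruct (@refine_good (t m) (proj1_sig m) Gm (proj2_sig m)) as [t' [Tt' [Hmt' [Gt' Ht']]]].
    exists t'. split; auto. split.
    + intros j Pj. destruct (tot j m) as [H|[E|H]].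
      * apply (TTle_trans (proj1 (proj1 (Ht j Pj))) (proj1 Gm) Tt'); auto.
      * subst j. auto.
      * exfalso. exact (Hm j Pj H).
    + intros j Pj b Rb. destruct (tot j m) as [H|[E|H]].
      * apply (Pm' j H). exact (rsp_R_mono Hr (proj1 Gm) Tt' Hmt' Rb).
      * subst j. auto.
      * exfalso. exact (Hm j Pj H).
  - assert (nomax : forall m, P m -> exists j, P j /\ ltX m j).
    { intros m Pm. apply NNPP; intros N1. apply Hnm. exists m. split; auto.
      intros j Pj H. apply N1. eauto. }
    destruct (@bound_lemma {j | P j} (fun a b => ltX (proj1_sig a) (proj1_sig b))
       (swo_sub P HXo) (card_le_sig P) (fun j => t (proj1_sig j))) as [c [Gc Hc]].
    + intros [j Pj]. exact (proj1 (Ht j Pj)).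
    + intros [j Pj] [k Pk] H. simpl in *. exact (proj1 (proj2 (Ht k Pk)) j H).
    + exists c. split; auto. split.
      * intros j Pj. exact (Hc (exist P j Pj)).
      * intros j Pj b Rb. destruct (nomax j Pj) as [k [Pk Hjk]].
        apply (proj2 (proj2 (Ht k Pk)) j Hjk).
        apply (rsp_R_mono Hr (proj1 (proj1 (Ht k Pk))) (proj1 Gc) (Hc (exist P k Pk)) Rb).
Qed.

Lemma realize (ltX : X -> X -> Prop) (HXo : swo ltX) : exists b, forall q, p q -> pholds N b q.
Proof.
  destruct HXo as [wf [tr tot]] eqn:EH.
  pose (Qm := fun (i : X) (t : X -> U) (a : U) => good a /\ (forall j, ltX j i -> le (t j) a) /\
     (forall j, ltX j i -> forall b, R b a -> pholds N b (proj1_sig j))).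
  destruct (@tc X U ltX wf rt Qm) as [t Ht].
  - intros i f g Hfg a [H1 [H2 H3]]. split; auto. split; auto. intros j Hj. rewrite -Hfg; auto.
  - intros i t IH. apply (@ext_lemma ltX HXo (fun j => ltX j i)).
    + intros j k H1 H2. eauto.
    + intros j Hj. exact (IH j Hj).
  - destruct (@ext_lemma ltX HXo (fun _ => True) (fun _ _ _ _ => I) t) as [a [Ga [_ Ha]]].
    + intros j _. exact (Ht j).
    + destruct Ga as [Ta Ga]. destruct (Ga nil) as [b [Rb _]]. { intros q []. }
      exists b. intros q pq. exact (Ha (exist p q pq) I b Rb).
Qed.

End Bound.

Lemma sat_main (Hsmall : below_kappa TT le {q | p q}) : realized N p.
Proof.
  destruct (finite_or_infinite {q | p q}) as [Hinf|[l Hl]].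
  - destruct (wo_exists {q | p q}) as [ltX HXo].
    destruct (realize Hsmall Hinf HXo) as [b Hb]. exists b. exact Hb.
  - destruct (Hfs (l := map (fun x => proj1_sig x) l)) as [b Hb].
    + apply map_plist.
    + exists b. intros q pq. apply Hb.
      apply (List.in_map (fun x : {q | p q} => proj1_sig x) l (exist p q pq)). apply Hl.
Qed.

End RSPsec.

Unset Implicit Arguments.

Theorem claim1p8 (L : vocab) (D : Type) (N : structure L D) (U : Type)
  (TT : U -> Prop) (le : U -> U -> Prop) (rt : U)
  (Delta : nat -> formula L -> Prop) (R : D -> U -> Prop)
  (F : forall n : nat, formula L -> U -> n.-tuple D -> U) :
  RSP N TT le rt Delta R F ->
  saturated N (below_kappa TT le) Delta.
Proof.
  intros Hr p HpD Hsmall Hfs. eapply sat_main; eauto.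
Qed.
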